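(* Let $f\in C^\infty([0,\infty))$ be any solution of \[ f''(y)+\left(\frac{2}{y}-\frac{y}{2}\right)f'(y)-\frac{1}{y^2}\sin(2f(y))=0\ \ (y>0),\qquad f(0)=0,\qquad \lim_{y\to\infty}f(y)\ \text{exists and is finite}. \] Then $f^{(2k)}(0)=0$ for all $k\in\mathbb N_0$, and for each $k\in\mathbb N$ there exists a constant $C_k>0$ such that $\lvert f^{(k)}(y)\rvert\le C_k\,y^{-2-k}$ for all $y\ge 1$. *)

(* Defs.v *)
From Stdlib Require Import Reals.
From Coquelicot Require Import Coquelicot.
Open Scope R_scope.

(* [smooth_derivs f D] : f is C^infinity on [0, +oo), and D k is its k-th
   derivative there.  D 0 agrees with f on [0,oo); for x > 0, D (k+1) x is the
   (two-sided) derivative of D k at x; at 0, D (k+1) 0 is the right derivative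
   of D k at 0.  (Continuity of every D k on [0,oo) follows from the
   differentiability of D k.)  Values of D k on (-oo,0) are irrelevant. *)
Definition smooth_derivs (f : R -> R) (D : nat -> R -> R) : Prop :=
  (forall x, 0 <= x -> D 0%nat x = f x) /\
  (forall (k : nat) (x : R), 0 < x -> is_derive (D k) x (D (S k) x)) /\
  (forall k : nat,
     filterlim (fun h => (D k h - D k 0) / h) (at_right 0)
               (locally (D (S k) 0))).

(* Main.v *)
Require Import Defs.
From Stdlib Require Import Reals Lra Lia Classical Bool.
From Coquelicot Require Import Coquelicot.
Open Scope R_scope.

Definition derivs_on (g g' : R -> R) := forall y, 0 < y -> is_derive g y (g' y).

Lemma locally_pos y : 0 < y -> locally y (fun t => 0 < t).
Proof.
  intros Hy. exists (mkposreal y Hy). intros t Ht.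
  unfold ball in Ht; simpl in Ht; unfold AbsRing_ball, abs, minus, plus, opp in Ht; simpl in Ht.
  apply Rabs_def2 in Ht. lra.
Qed.

Lemma derivs_ext g h g' : (forall y, 0 < y -> g y = h y) -> derivs_on g g' -> derivs_on h g'.
Proof.
  intros E D y Hy. apply (is_derive_ext_loc g h); [|now apply D].
  apply (filter_imp (fun t => 0 < t)); [intros; now apply E|now apply locally_pos].
Qed.

Lemma derivs_uniq g a b : derivs_on g a -> derivs_on g b -> forall y, 0 < y -> a y = b y.
Proof.
  intros Ha Hb y Hy. rewrite <- (is_derive_unique _ _ _ (Ha y Hy)).
  now rewrite (is_derive_unique _ _ _ (Hb y Hy)).
Qed.

Lemma derivs_plus g g' h h' : derivs_on g g' -> derivs_on h h' ->
  derivs_on (fun y => g y + h y) (fun y => g' y + h' y).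
Proof. intros A B y Hy. apply (is_derive_plus g h); auto. Qed.

Lemma derivs_scal k g g' : derivs_on g g' -> derivs_on (fun y => k * g y) (fun y => k * g' y).
Proof. intros A y Hy. apply is_derive_scal; auto. Qed.

Lemma derivs_mult g g' h h' : derivs_on g g' -> derivs_on h h' ->
  derivs_on (fun y => g y * h y) (fun y => g' y * h y + g y * h' y).
Proof. intros A B y Hy. apply (is_derive_mult g h); auto. intros; apply Rmult_comm. Qed.

Definition bnd (a : nat) (g : R -> R) := exists C, forall y, 1 <= y -> Rabs (g y) <= C / y ^ a.

Fixpoint Tower (n a : nat) (g : R -> R) : Prop :=
  bnd a g /\ match n with O => True | S n' => exists g', derivs_on g g' /\ Tower n' (S a) g' end.

Lemma bnd_ext a g h : (forall y, 0 < y -> g y = h y) -> bnd a g -> bnd a h.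
Proof. intros E [C HC]. exists C. intros y Hy. rewrite <- E by lra. auto. Qed.

Lemma Tower_ext n : forall a g h, (forall y, 0 < y -> g y = h y) -> Tower n a g -> Tower n a h.
Proof.
  induction n; simpl; intros a g h E [B T].
  - split; auto. now apply (bnd_ext _ g).
  - split. now apply (bnd_ext _ g). destruct T as [g' [Dg T]]. exists g'; split; auto.
    now apply (derivs_ext g).
Qed.

Lemma pow_pos1 y a : 1 <= y -> 0 < y ^ a.
Proof. intros; apply pow_lt; lra. Qed.

Lemma bnd_C a g C : (forall y, 1 <= y -> Rabs (g y) <= C / y ^ a) -> 0 <= C.
Proof. intros H. specialize (H 1 (Rle_refl _)). rewrite pow1 in H.
  pose proof (Rabs_pos (g 1)). unfold Rdiv in H. rewrite Rinv_1 in H. lra. Qed.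

Lemma bnd_mono a b g : (b <= a)%nat -> bnd a g -> bnd b g.
Proof.
  intros Hab [C HC]. exists C. intros y Hy. pose proof (bnd_C _ _ _ HC).
  eapply Rle_trans. apply HC; auto. unfold Rdiv. apply Rmult_le_compat_l; auto.
  apply Rinv_le_contravar. now apply pow_pos1. now apply Rle_pow.
Qed.

Lemma Tower_mono_a n : forall a b g, (b <= a)%nat -> Tower n a g -> Tower n b g.
Proof.
  induction n; simpl; intros a b g Hab [B T].
  - split; auto. now apply (bnd_mono a).
  - split. now apply (bnd_mono a). destruct T as [g' [Dg T]]. exists g'; split; auto.
    apply (IHn (S a)); auto; lia.
Qed.

Lemma Tower_S n : forall a g, Tower (S n) a g -> Tower n a g.
Proof.
  induction n; simpl; intros a g [B T]. tauto.
  destruct T as [g' [Dg T]]. split; auto. exists g'; split; auto.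
Qed.

Lemma Tower_mono_n m n a g : (m <= n)%nat -> Tower n a g -> Tower m a g.
Proof. induction 1; auto. intros; apply IHle, Tower_S; auto. Qed.

Lemma bnd_plus a g h : bnd a g -> bnd a h -> bnd a (fun y => g y + h y).
Proof.
  intros [C1 H1] [C2 H2]. exists (C1 + C2). intros y Hy.
  eapply Rle_trans. apply Rabs_triang.
  specialize (H1 y Hy); specialize (H2 y Hy). unfold Rdiv in *. lra.
Qed.

Lemma Tower_plus n : forall a g h, Tower n a g -> Tower n a h -> Tower n a (fun y => g y + h y).
Proof.
  induction n; simpl; intros a g h [B1 T1] [B2 T2].
  - split; auto. now apply bnd_plus.
  - split. now apply bnd_plus. destruct T1 as [g' [Dg T1]], T2 as [h' [Dh T2]].
    exists (fun y => g' y + h' y). split. now apply derivs_plus. auto.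
Qed.

Lemma bnd_scal a k g : bnd a g -> bnd a (fun y => k * g y).
Proof.
  intros [C H]. exists (Rabs k * C). intros y Hy. rewrite Rabs_mult.
  unfold Rdiv; rewrite Rmult_assoc. apply Rmult_le_compat_l. apply Rabs_pos. apply H; auto.
Qed.

Lemma Tower_scal n : forall a k g, Tower n a g -> Tower n a (fun y => k * g y).
Proof.
  induction n; simpl; intros a k g [B T].
  - split; auto. now apply bnd_scal.
  - split. now apply bnd_scal. destruct T as [g' [Dg T]].
    exists (fun y => k * g' y). split. now apply derivs_scal. auto.
Qed.

Lemma bnd_mult a b g h : bnd a g -> bnd b h -> bnd (a + b) (fun y => g y * h y).
Proof.
  intros [C1 H1] [C2 H2]. exists (C1 * C2). intros y Hy.
  pose proof (bnd_C _ _ _ H1). pose proof (bnd_C _ _ _ H2).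
  rewrite Rabs_mult, pow_add.
  replace (C1 * C2 / (y ^ a * y ^ b)) with ((C1 / y ^ a) * (C2 / y ^ b)).
  apply Rmult_le_compat; auto using Rabs_pos.
  field. split; apply Rgt_not_eq, pow_pos1; auto.
Qed.

Lemma Tower_mult n : forall a b g h, Tower n a g -> Tower n b h -> Tower n (a + b) (fun y => g y * h y).
Proof.
  induction n; simpl; intros a b g h [B1 T1] [B2 T2].
  - split; auto. now apply bnd_mult.
  - split. now apply bnd_mult. destruct T1 as [g' [Dg T1]], T2 as [h' [Dh T2]].
    exists (fun y => g' y * h y + g y * h' y). split. now apply derivs_mult.
    apply Tower_plus.
    + apply (IHn (S a) b); auto. apply Tower_S; simpl; split; auto; eauto.
    + rewrite <- Nat.add_succ_r. apply IHn; auto. apply Tower_S; simpl; split; auto; eauto.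
Qed.

Lemma Tower_family n : forall a F, (forall k, derivs_on (F k) (F (S k))) ->
  (forall k, (k <= n)%nat -> bnd (a + k) (F k)) -> Tower n a (F O).
Proof.
  induction n; simpl; intros a F DF B.
  - split; auto. rewrite <- (Nat.add_0_r a). apply B; lia.
  - split. rewrite <- (Nat.add_0_r a). apply B; lia.
    exists (F 1%nat). split; auto. apply (IHn (S a) (fun k => F (S k))); auto.
    intros k Hk. replace (S a + k)%nat with (a + S k)%nat by lia. apply B. lia.
Qed.

Lemma Tower_get n : forall a g F, Tower n a g -> (forall y, 0 < y -> F O y = g y) ->
  (forall k, derivs_on (F k) (F (S k))) -> forall k, (k <= n)%nat -> bnd (a + k) (F k).
Proof.
  induction n; simpl; intros a g F [B T] E DF k Hk.
  - replace k with O by lia. rewrite Nat.add_0_r. apply (bnd_ext _ g); auto.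
    intros; symmetry; auto.
  - destruct k. rewrite Nat.add_0_r. apply (bnd_ext _ g); auto. intros; symmetry; auto.
    destruct T as [g' [Dg T]]. replace (a + S k)%nat with (S a + k)%nat by lia.
    apply (IHn (S a) g' (fun k => F (S k))); auto; try lia.
    intros y Hy. apply (derivs_uniq g); auto. apply (derivs_ext (F O)); auto.
Qed.


Lemma exp_ge_x x : 0 <= x -> x <= exp x.
Proof.
  intros Hx. destruct (Req_dec x 0). subst. rewrite exp_0. lra.
  pose proof (exp_ineq1 x H). lra.
Qed.

Lemma exp_big y : 0 <= y -> y ^ 4 / 64 <= exp (y ^ 2 / 4).
Proof.
  intros Hy. set (x := y ^ 2 / 4).
  assert (0 <= x) by (unfold x; pose proof (pow2_ge_0 y); lra).
  replace (exp x) with (exp (x/2) * exp (x/2)) by (rewrite <- exp_plus; f_equal; lra).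
  pose proof (exp_ge_x (x/2) ltac:(lra)).
  replace (y ^ 4 / 64) with ((x/2) * (x/2)) by (unfold x; simpl; field).
  apply Rmult_le_compat; lra.
Qed.

Lemma barrier (v w : R -> R) (K : R) (p : nat) :
  (forall y, 1 <= y -> is_derive v y (w y)) -> 0 <= K ->
  (forall y, 1 <= y -> y / 2 * v y - K / y ^ p <= w y) ->
  (forall y, 1 <= y -> v y <= (2 * K + 2) / y ^ (S p)) \/
  (exists eps y0, 0 < eps /\ 1 <= y0 /\ forall y, y0 <= y -> eps * exp (y ^ 2 / 4) <= v y).
Proof.
  intros Dv HK Hw.
  set (B := 2 * K + 2).
  destruct (classic (exists y1, 1 <= y1 /\ B / y1 ^ (S p) < v y1)) as [[y1 [H1 H2]]|N].
  2:{ left. intros y Hy. apply Rnot_lt_le. intro. apply N. eauto. }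
  right.
  set (z := fun y => (v y - B / y ^ (S p)) * exp (- (y ^ 2 / 4))).
  set (zd := fun y => (w y + B * INR (S p) / (y * (y * y ^ p))) * exp (- (y ^ 2 / 4))
                 + (v y - B / (y * y ^ p)) * (- (y / 2) * exp (- (y ^ 2 / 4)))).
  assert (Dz : forall y, 1 <= y -> is_derive z y (zd y)).
  { intros y Hy. assert (yp : 0 < y ^ p) by (apply pow_lt; lra).
    unfold z, zd. auto_derive.
    - repeat split; try (exists (w y); apply Dv; auto). apply Rgt_not_eq, Rmult_lt_0_compat; lra.
    - replace (Derive (fun x => v x) y) with (w y) by (symmetry; apply is_derive_unique; apply Dv; auto).
      replace (- (y * (y * 1) * / 4)) with (- (y ^ 2 / 4)) by (simpl; field).
      rewrite S_INR.
      destruct p; simpl. field; lra. field. split; [apply pow_nonzero|]; lra. }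
  assert (Pz : forall y, 1 <= y -> zd y > 0).
  { intros y Hy. assert (yp : 0 < y ^ p) by (apply pow_lt; lra).
    assert (E : y / 2 * (B / (y * y ^ p)) = K * / y ^ p + / y ^ p) by (unfold B; field; lra).
    assert (X : 0 <= B * INR (S p) / (y * (y * y ^ p))).
    { unfold Rdiv. apply Rmult_le_pos. apply Rmult_le_pos. unfold B; lra. apply pos_INR.
      apply Rlt_le, Rinv_0_lt_compat. apply Rmult_lt_0_compat; try lra. apply Rmult_lt_0_compat; lra. }
    assert (0 < / y ^ p) by (apply Rinv_0_lt_compat; auto).
    specialize (Hw y Hy). unfold Rdiv in Hw.
    assert (0 < exp (- (y ^ 2 / 4))) by apply exp_pos.
    unfold zd.
    replace ((w y + B * INR (S p) / (y * (y * y ^ p))) * exp (- (y ^ 2 / 4)) +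
      (v y - B / (y * y ^ p)) * (- (y / 2) * exp (- (y ^ 2 / 4)))) with
      ((w y + B * INR (S p) / (y * (y * y ^ p)) - y / 2 * v y + y / 2 * (B / (y * y ^ p))) * exp (- (y ^ 2 / 4))) by ring.
    rewrite E. apply Rmult_lt_0_compat; auto. lra. }
  assert (Inc := incr_function_le z (Finite y1) p_infty zd).
  simpl in Inc.
  assert (Inc' : forall x y, y1 <= x -> x < y -> z x < z y).
  { intros x y Hx Hxy. apply Inc; auto.
    - intros t Ht _. apply Dz. lra.
    - intros t Ht _. apply Pz. lra. }
  exists (z y1), y1. split; [|split]; auto.
  - unfold z. apply Rmult_lt_0_compat. lra. apply exp_pos.
  - intros y Hy.
    assert (z y1 <= z y) by (destruct (Req_dec y y1); [subst; lra| apply Rlt_le, Inc'; lra]).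
    assert (E : v y = z y * exp (y ^ 2 / 4) + B / y ^ (S p)).
    { unfold z. rewrite Rmult_assoc, <- exp_plus.
      replace (- (y ^ 2 / 4) + y ^ 2 / 4) with 0 by ring. rewrite exp_0. ring. }
    assert (0 <= B / y ^ (S p)).
    { unfold Rdiv, B. apply Rmult_le_pos. lra. apply Rlt_le, Rinv_0_lt_compat, pow_lt; lra. }
    rewrite E. pose proof (exp_pos (y ^ 2 / 4)).
    assert (z y1 * exp (y ^ 2 / 4) <= z y * exp (y ^ 2 / 4)) by (apply Rmult_le_compat_r; lra).
    lra.
Qed.

Lemma no_explode_bounded (v : R -> R) M :
  (forall y, 1 <= y -> v y <= M) ->
  ~ (exists eps y0, 0 < eps /\ 1 <= y0 /\ forall y, y0 <= y -> eps * exp (y ^ 2 / 4) <= v y).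
Proof.
  intros HM [eps [y0 [He [Hy0 Hv]]]].
  set (y := y0 + 64 * Rabs M / eps + 1).
  assert (0 <= 64 * Rabs M / eps) by (unfold Rdiv; apply Rmult_le_pos; [pose proof (Rabs_pos M); lra| apply Rlt_le, Rinv_0_lt_compat; lra]).
  assert (Hy : 1 <= y) by (unfold y; lra).
  assert (y <= y ^ 4).
  { assert (1 <= y ^ 3) by (apply pow_R1_Rle; lra). replace (y ^ 4) with (y * y ^ 3) by ring.
    assert (y * 1 <= y * y ^ 3) by (apply Rmult_le_compat_l; lra). lra. }
  pose proof (exp_big y ltac:(lra)).
  specialize (Hv y ltac:(unfold y; lra)). specialize (HM y Hy).
  assert (eps * (y ^ 4 / 64) <= eps * exp (y ^ 2 / 4)) by (apply Rmult_le_compat_l; lra).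
  assert (64 * Rabs M / eps < y) by (unfold y; lra).
  assert (64 * Rabs M < eps * y).
  { apply (Rmult_lt_compat_l eps) in H3; auto. field_simplify in H3; lra. }
  pose proof (Rle_abs M).
  assert (eps * y <= eps * y ^ 4) by (apply Rmult_le_compat_l; lra). lra.
Qed.


Lemma Rabs_def2b a b : Rabs a <= b -> - b <= a <= b.
Proof. unfold Rabs; destruct Rcase_abs; lra. Qed.

Lemma derivs_val g a b : derivs_on g a -> (forall y, 0 < y -> a y = b y) -> derivs_on g b.
Proof. intros H E y Hy. rewrite <- E by auto. auto. Qed.

Lemma no_growth (g g' : R -> R) L : derivs_on g g' -> is_lim g p_infty (Finite L) ->
  ~ (exists Y, forall y, Y <= y -> 1 <= g' y).
Proof.
  intros Dg Hl [Y HY].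
  assert (Hb : locally L (fun t => Rabs (t - L) < 1)).
  { exists (mkposreal 1 Rlt_0_1). intros t Ht. unfold ball in Ht; simpl in Ht;
    unfold AbsRing_ball, abs, minus, plus, opp in Ht; simpl in Ht. auto. }
  destruct (Hl _ Hb) as [M HM].
  set (x1 := Rmax (Rmax M Y) 1 + 1).
  assert (x1 > M /\ x1 >= Y + 1 /\ x1 >= 2) as [A1 [A2 A3]].
  { unfold x1. pose proof (Rmax_l (Rmax M Y) 1). pose proof (Rmax_r (Rmax M Y) 1).
    pose proof (Rmax_l M Y). pose proof (Rmax_r M Y). lra. }
  assert (Inc := incr_function_le (fun x => g x - x / 2) (Finite x1) (Finite (x1 + 4))
    (fun x => g' x - 1 / 2)).
  simpl in Inc.
  assert (g x1 - x1 / 2 < g (x1 + 4) - (x1 + 4) / 2).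
  { apply Inc; try lra.
    - intros x Hx1 Hx2. apply (is_derive_minus g (fun x => x / 2)). apply Dg; lra.
      auto_derive; auto; lra.
    - intros x Hx1 Hx2. specialize (HY x ltac:(lra)). lra. }
  pose proof (HM x1 ltac:(lra)). pose proof (HM (x1 + 4) ltac:(lra)). simpl in *.
  apply Rabs_def2 in H0. apply Rabs_def2 in H1. lra.
Qed.

Lemma base_refute (g g' h : R -> R) : derivs_on g g' -> (exists L, is_lim g p_infty (Finite L)) ->
  (forall y, 1 <= y -> h y = y ^ 2 * g' y) ->
  ~ (exists eps y0, 0 < eps /\ 1 <= y0 /\ forall y, y0 <= y -> eps * exp (y ^ 2 / 4) <= h y).
Proof.
  intros Dg [L HL] Eh [eps [y0 [He [Hy0 Hh]]]].
  apply (no_growth g g' L Dg HL). exists (y0 + 64 / eps + 1). intros y Hy.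
  assert (0 < 64 / eps) by (apply Rdiv_lt_0_compat; lra).
  assert (1 <= y) by lra.
  specialize (Hh y ltac:(lra)). rewrite Eh in Hh by auto.
  pose proof (exp_big y ltac:(lra)).
  assert (eps * (y ^ 4 / 64) <= y ^ 2 * g' y).
  { eapply Rle_trans; [|exact Hh]. apply Rmult_le_compat_l; lra. }
  assert (Hy2 : 64 / eps <= y ^ 2) by (simpl; nra).
  assert (y2 : 0 < y ^ 2) by (simpl; nra).
  assert (eps * (y ^ 2 / 64) <= g' y).
  { apply (Rmult_le_reg_l (y ^ 2)); auto.
    assert (Eq : y ^ 2 * (eps * (y ^ 2 / 64)) = eps * (y ^ 4 / 64)) by (simpl; field). lra. }
  assert (64 <= eps * y ^ 2).
  { assert (eps * (64 / eps) = 64) by (field; lra).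
    assert (eps * (64 / eps) <= eps * y ^ 2) by (apply Rmult_le_compat_l; lra). lra. }
  lra.
Qed.

Lemma bnd0_sin g : bnd 0 (fun y => sin (g y)).
Proof. exists 1. intros y _. simpl. unfold Rdiv. rewrite Rinv_1, Rmult_1_r. apply Rabs_le, SIN_bound. Qed.
Lemma bnd0_cos g : bnd 0 (fun y => cos (g y)).
Proof. exists 1. intros y _. simpl. unfold Rdiv. rewrite Rinv_1, Rmult_1_r. apply Rabs_le, COS_bound. Qed.

Section P2.
Context (f : R -> R) (D : nat -> R -> R)
  (HD : forall k, derivs_on (D k) (D (S k)))
  (Hf : forall y, 0 <= y -> D O y = f y)
  (ODE : forall y, 0 < y ->
     D 2%nat y + (2 / y - y / 2) * D 1%nat y - / (y ^ 2) * sin (2 * f y) = 0)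
  (Hlim : exists L : R, is_lim f p_infty (Finite L)).

Let s := fun y => sin (2 * f y).
Let c := fun y => cos (2 * f y).

Lemma Df : derivs_on f (D 1%nat).
Proof. apply (derivs_ext (D O)). intros; apply Hf; lra. apply HD. Qed.

Lemma Ds : derivs_on s (fun y => 2 * (c y * D 1%nat y)).
Proof.
  intros y Hy. unfold s, c.
  assert (Hg : is_derive (fun y => 2 * f y) y (2 * D 1%nat y)) by (apply is_derive_scal, Df; auto).
  assert (H := is_derive_comp sin (fun y => 2 * f y) y _ _ (is_derive_sin _) Hg).
  replace (2 * (cos (2 * f y) * D 1%nat y)) with (scal (2 * D 1%nat y) (cos (2 * f y))). exact H.
  unfold scal; simpl; unfold mult; simpl. ring.
Qed.

Lemma Dc : derivs_on c (fun y => -2 * (s y * D 1%nat y)).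
Proof.
  intros y Hy. unfold s, c.
  assert (Hg : is_derive (fun y => 2 * f y) y (2 * D 1%nat y)) by (apply is_derive_scal, Df; auto).
  assert (H := is_derive_comp cos (fun y => 2 * f y) y _ _ (is_derive_cos _) Hg).
  replace (-2 * (sin (2 * f y) * D 1%nat y)) with (scal (2 * D 1%nat y) (- sin (2 * f y))). exact H.
  unfold scal; simpl; unfold mult; simpl. ring.
Qed.

Lemma sc_step m : Tower m 0 s -> Tower m 0 c -> Tower m 1 (D 1%nat) ->
  Tower (S m) 0 s /\ Tower (S m) 0 c.
Proof.
  intros Ts Tc T1. split; simpl; split.
  - apply bnd0_sin.
  - exists (fun y => 2 * (c y * D 1%nat y)). split. apply Ds.
    apply Tower_scal. apply (Tower_mult m 0 1); auto.
  - apply bnd0_cos.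
  - exists (fun y => -2 * (s y * D 1%nat y)). split. apply Dc.
    apply Tower_scal. apply (Tower_mult m 0 1); auto.
Qed.

Lemma sc_tower n : Tower n 1 (D 1%nat) -> Tower (S n) 0 s /\ Tower (S n) 0 c.
Proof.
  induction n; intros T.
  - apply sc_step; auto; simpl; split; auto. apply bnd0_sin. apply bnd0_cos.
  - destruct (IHn (Tower_S _ _ _ T)). apply sc_step; auto.
Qed.

Lemma inv_tower n : Tower n 1 (fun y => / y).
Proof.
  induction n; simpl; split.
  - exists 1. intros y Hy. rewrite Rabs_right. unfold Rdiv. rewrite pow_1. lra.
    apply Rle_ge, Rlt_le, Rinv_0_lt_compat; lra.
  - auto.
  - exists 1. intros y Hy. rewrite Rabs_right. unfold Rdiv. rewrite pow_1. lra.
    apply Rle_ge, Rlt_le, Rinv_0_lt_compat; lra.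
  - exists (fun y => -1 * (/ y * / y)). split.
    + intros y Hy. assert (H := is_derive_inv (fun y => y) y _ (is_derive_id y) ltac:(lra)).
      replace (-1 * (/ y * / y)) with (- one / y ^ 2). exact H. simpl; unfold one; simpl. field; lra.
    + apply Tower_scal. apply (Tower_mult n 1 1); auto.
Qed.

Let E := fun y => -2 * (/ y * D 1%nat y) + (/ y * / y) * s y.

Lemma E_tower m : Tower m 1 (D 1%nat) -> Tower m 0 s -> Tower m 2 E.
Proof.
  intros T1 Ts. unfold E. apply Tower_plus.
  - apply Tower_scal. apply (Tower_mult m 1 1); auto. apply inv_tower.
  - apply (Tower_mult m 2 0); auto. apply (Tower_mult m 1 1); apply inv_tower.
Qed.

Let G := fun (j : nat) y => D (S (S j)) y - y / 2 * D (S j) y - INR j / 2 * D j y.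

Lemma DG j : derivs_on (G j) (G (S j)).
Proof.
  intros y Hy. unfold G.
  assert (H1 := HD (S (S j)) y Hy). assert (H2 := HD (S j) y Hy). assert (H3 := HD j y Hy).
  assert (H4 : is_derive (fun y => y / 2) y (1/2)) by (auto_derive; auto; lra).
  assert (H5 := is_derive_mult _ _ _ _ _ H4 H2 ltac:(intros; apply Rmult_comm)).
  assert (H6 := is_derive_scal _ _ (INR j / 2) _ H3).
  assert (H7 := is_derive_minus _ _ _ _ _ (is_derive_minus _ _ _ _ _ H1 H5) H6).
  simpl in H7. unfold minus, plus, opp, mult in H7; simpl in H7.
  replace (D (S (S (S j))) y - y / 2 * D (S (S j)) y - INR (S j) / 2 * D (S j) y) with
   (D (S (S (S j))) y + - (1 / 2 * D (S j) y + y / 2 * D (S (S j)) y) + - (INR j / 2 * D (S j) y)).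
  exact H7. rewrite S_INR. field.
Qed.

Lemma G0E y : 0 < y -> G O y = E y.
Proof.
  intros Hy. unfold G, E, s. pose proof (ODE y Hy). simpl INR.
  assert (E2 : D 2%nat y = - ((2 / y - y / 2) * D 1%nat y) + / (y ^ 2) * sin (2 * f y)) by lra.
  rewrite E2. simpl. field. lra.
Qed.

Lemma bnd_half_y a g : bnd (S a) g -> bnd a (fun y => y / 2 * g y).
Proof.
  intros [C HC]. exists (C / 2). intros y Hy. rewrite Rabs_mult, (Rabs_right (y / 2)) by lra.
  replace (C / 2 / y ^ a) with (y / 2 * (C / y ^ S a)). apply Rmult_le_compat_l. lra. auto.
  simpl. field. split. apply pow_nonzero; lra. lra.
Qed.

Lemma div_pow_le C a y : 0 <= C -> 1 <= y -> C / y ^ a <= C.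
Proof.
  intros HC Hy. pose proof (pow_R1_Rle y a Hy). unfold Rdiv.
  rewrite <- (Rmult_1_r C) at 2. apply Rmult_le_compat_l; auto.
  rewrite <- Rinv_1. apply Rinv_le_contravar; lra.
Qed.

Definition Strong m := forall j, (j <= m)%nat -> bnd (3 + j) (D (S j)).

Lemma weak_step m : Strong m -> bnd (S (S m)) (D (S (S m))).
Proof.
  intros St.
  assert (T3 : Tower m 3 (D 1%nat)) by (apply (Tower_family m 3 (fun k => D (S k))); auto).
  assert (T1 : Tower m 1 (D 1%nat)) by (apply (Tower_mono_a m 3); auto).
  assert (Ts : Tower m 0 s) by (apply Tower_S, (sc_tower m T1)).
  assert (TE := E_tower m T1 Ts).
  assert (BG := Tower_get m 2 E G TE G0E DG m (le_n _)).
  assert (B1 : bnd (S (S m)) (fun y => y / 2 * D (S m) y)) by (apply bnd_half_y, (St m); auto).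
  assert (B2 : bnd (S (S m)) (fun y => INR m / 2 * D m y)).
  { destruct m. exists 0. intros y Hy. simpl. unfold Rdiv. rewrite Rmult_0_l, Rmult_0_l, Rmult_0_l, Rabs_R0. lra.
    apply bnd_scal. apply (St m). lia. }
  apply (bnd_ext _ (fun y => G m y + (y / 2 * D (S m) y + INR m / 2 * D m y))).
  intros y Hy. unfold G. ring.
  apply bnd_plus; auto. apply bnd_plus; auto.
Qed.

Lemma strong_step m : Strong m -> bnd (S (S (S (S m)))) (D (S (S m))).
Proof.
  intros St. assert (W := weak_step m St).
  assert (T1 : Tower (S m) 1 (D 1%nat)).
  { apply (Tower_family (S m) 1 (fun k => D (S k))); auto. intros k Hk.
    destruct (Nat.eq_dec k (S m)). subst. exact W.
    apply (bnd_mono (3 + k)). lia. apply St. lia. }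
  assert (Ts : Tower (S m) 0 s) by (apply Tower_S, (sc_tower (S m) T1)).
  assert (TE := E_tower (S m) T1 Ts).
  assert (BG := Tower_get (S m) 2 E G TE G0E DG (S m) (le_n _)).
  assert (Br : bnd (S (S (S m))) (fun y => G (S m) y + INR (S m) / 2 * D (S m) y)).
  { apply bnd_plus. exact BG. apply bnd_scal. apply St. lia. }
  destruct Br as [K HK]. pose proof (bnd_C _ _ _ HK) as K0.
  destruct W as [Cw HW]. pose proof (bnd_C _ _ _ HW) as C0.
  assert (Ew : forall y, 0 < y -> D (S (S (S m))) y =
     y / 2 * D (S (S m)) y + (G (S m) y + INR (S m) / 2 * D (S m) y)).
  { intros y Hy. unfold G. ring. }
  assert (Up : forall y, 1 <= y -> D (S (S m)) y <= (2 * K + 2) / y ^ (S (S (S (S m))))).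
  { destruct (barrier (D (S (S m))) (D (S (S (S m)))) K (S (S (S m)))) as [H|H]; auto.
    - intros y Hy. apply HD. lra.
    - intros y Hy. rewrite Ew by lra. specialize (HK y Hy). apply Rabs_def2b in HK. lra.
    - exfalso. apply (no_explode_bounded (D (S (S m))) Cw); auto. intros y Hy. specialize (HW y Hy).
      apply Rabs_def2b in HW. pose proof (div_pow_le Cw (S (S m)) y C0 Hy). lra. }
  assert (Lo : forall y, 1 <= y -> - D (S (S m)) y <= (2 * K + 2) / y ^ (S (S (S (S m))))).
  { destruct (barrier (fun y => - D (S (S m)) y) (fun y => - D (S (S (S m))) y) K (S (S (S m)))) as [H|H]; auto.
    - intros y Hy. apply (is_derive_opp (D (S (S m)))). apply HD. lra.
    - intros y Hy. rewrite Ew by lra. specialize (HK y Hy). apply Rabs_def2b in HK. lra.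
    - exfalso. apply (no_explode_bounded (fun y => - D (S (S m)) y) Cw); auto. intros y Hy. specialize (HW y Hy).
      apply Rabs_def2b in HW. pose proof (div_pow_le Cw (S (S m)) y C0 Hy). lra. }
  exists (2 * K + 2). intros y Hy. apply Rabs_le. specialize (Up y Hy). specialize (Lo y Hy). lra.
Qed.

Lemma base_bound : bnd 3 (D 1%nat).
Proof.
  set (h := fun y => y ^ 2 * D 1%nat y).
  set (hd := fun y => s y + y / 2 * h y).
  assert (Dh : forall y, 0 < y -> is_derive h y (hd y)).
  { intros y Hy. unfold h, hd, s.
    assert (Hp : is_derive (fun y => y ^ 2) y (2 * y)) by (auto_derive; auto; ring).
    assert (H := is_derive_mult _ _ _ _ _ Hp (HD 1%nat y Hy) ltac:(intros; apply Rmult_comm)).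
    simpl in H. unfold plus, mult in H; simpl in H.
    pose proof (ODE y Hy).
    assert (E2 : D 2%nat y = - ((2 / y - y / 2) * D 1%nat y) + / (y ^ 2) * sin (2 * f y)) by lra.
    rewrite E2 in H. unfold h. replace (sin (2 * f y) + y / 2 * (y ^ 2 * D 1%nat y)) with
     (2 * y * D 1%nat y + y * (y * 1) * (- ((2 / y - y / 2) * D 1%nat y) + / y ^ 2 * sin (2 * f y))).
    exact H. simpl. field. lra. }
  assert (Sb : forall y, -1 <= s y <= 1) by (intros; unfold s; apply SIN_bound).
  assert (Up : forall y, 1 <= y -> h y <= (2 * 1 + 2) / y ^ 1).
  { destruct (barrier h hd 1 0) as [H|H]; auto; try lra.
    - intros y Hy. apply Dh; lra.
    - intros y Hy. unfold hd. simpl. specialize (Sb y). unfold Rdiv. rewrite Rinv_1. lra.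
    - exfalso. apply (base_refute f (D 1%nat) h Df Hlim); auto. }
  assert (Lo : forall y, 1 <= y -> - h y <= (2 * 1 + 2) / y ^ 1).
  { destruct (barrier (fun y => - h y) (fun y => - hd y) 1 0) as [H|H]; auto; try lra.
    - intros y Hy. apply (is_derive_opp h). apply Dh; lra.
    - intros y Hy. unfold hd. simpl. specialize (Sb y). unfold Rdiv. rewrite Rinv_1. lra.
    - exfalso. destruct Hlim as [L HL].
      apply (base_refute (fun y => - f y) (fun y => - D 1%nat y) (fun y => - h y)); auto.
      + intros y Hy. apply (is_derive_opp f). apply Df; auto.
      + exists (- L). apply (is_lim_opp f p_infty L HL).
      + intros. unfold h. ring. }
  exists 4. intros y Hy. specialize (Up y Hy). specialize (Lo y Hy).
  assert (y2 : 0 < y ^ 2) by (simpl; nra).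
  assert (Rabs (h y) <= 4 / y) by (apply Rabs_le; simpl in *; replace (4 / y) with ((2 * 1 + 2) / (y * 1)) by (field; lra); lra).
  unfold h in H. rewrite Rabs_mult, (Rabs_right (y ^ 2)) in H by lra.
  apply (Rmult_le_reg_l (y ^ 2)); auto.
  replace (y ^ 2 * (4 / y ^ 3)) with (4 / y) by (simpl; field; lra). exact H.
Qed.

Lemma strong_all m : Strong m.
Proof.
  induction m; intros j Hj.
  - replace j with O by lia. apply base_bound.
  - destruct (Nat.eq_dec j (S m)). subst. apply strong_step; auto. apply IHm. lia.
Qed.
End P2.


Definition R0lim (g : R -> R) (l : R) := filterlim g (at_right 0) (locally l).

Lemma R0lim_mult g h a b : R0lim g a -> R0lim h b -> R0lim (fun y => g y * h y) (a * b).
Proof. intros. unfold R0lim. eapply filterlim_comp_2; eauto. apply (filterlim_mult a b). Qed.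

Lemma R0lim_plus g h a b : R0lim g a -> R0lim h b -> R0lim (fun y => g y + h y) (a + b).
Proof. intros. unfold R0lim. eapply filterlim_comp_2; eauto. apply (filterlim_plus a b). Qed.

Lemma R0lim_const k : R0lim (fun _ => k) k.
Proof. apply filterlim_const. Qed.

Lemma R0lim_scal k g a : R0lim g a -> R0lim (fun y => k * g y) (k * a).
Proof. intros. apply R0lim_mult; auto. apply R0lim_const. Qed.

Lemma R0lim_id : R0lim (fun y => y) 0.
Proof.
  intros P [eps HP]. exists eps. intros y Hy _. apply HP. auto.
Qed.

Lemma R0lim_ext g h l : (forall y, 0 < y -> g y = h y) -> R0lim g l -> R0lim h l.
Proof. intros E H. unfold R0lim, at_right. eapply filterlim_within_ext; eauto. Qed.

Lemma R0lim_uniq g a b : R0lim g a -> R0lim g b -> a = b.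
Proof.
  intros. apply (filterlim_locally_unique (F := at_right 0) g); auto.
Qed.

Lemma R0lim_cont (F : R -> R) g a : continuous F a -> R0lim g a -> R0lim (fun y => F (g y)) (F a).
Proof. intros HF Hg. unfold R0lim. eapply filterlim_comp; eauto. Qed.

Definition cond (p : bool) (N M : nat) (l : R) := ((0 < N)%nat /\ p = true) \/ (0 < M)%nat -> l = 0.

Fixpoint PT (n : nat) (p : bool) (N M : nat) (g : R -> R) : Prop :=
  (exists l, R0lim g l /\ cond p N M l) /\
  match n with O => True | S n' => exists g', derivs_on g g' /\ PT n' (negb p) (pred N) (pred M) g' end.

Lemma PT_ext n : forall p N M g h, (forall y, 0 < y -> g y = h y) -> PT n p N M g -> PT n p N M h.
Proof.
  induction n; simpl; intros p N M g h E [[l [L C]] T].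
  - split; auto. exists l; split; auto. now apply (R0lim_ext g).
  - split. exists l; split; auto. now apply (R0lim_ext g).
    destruct T as [g' [Dg T]]. exists g'; split; auto. now apply (derivs_ext g).
Qed.

Lemma PT_mono n : forall p N M N' M' g, (N' <= N)%nat -> (M' <= M)%nat -> PT n p N M g -> PT n p N' M' g.
Proof.
  induction n; simpl; intros p N M N' M' g H1 H2 [[l [L C]] T].
  - split; auto. exists l; split; auto. unfold cond in *; intros Hc. apply C. destruct Hc as [[a b]|b]; [left; split; auto; lia | right; lia].
  - split. exists l; split; auto. unfold cond in *; intros Hc. apply C. destruct Hc as [[a b]|b]; [left; split; auto; lia | right; lia].
    destruct T as [g' [Dg T]]. exists g'; split; auto. apply (IHn _ (pred N) (pred M)); auto; lia.
Qed.

Lemma PT_S n : forall p N M g, PT (S n) p N M g -> PT n p N M g.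
Proof.
  induction n; simpl; intros p N M g [Hl T]. tauto.
  destruct T as [g' [Dg T]]. split; auto. exists g'; split; auto.
Qed.

Lemma PT_plus n : forall p N M g h, PT n p N M g -> PT n p N M h -> PT n p N M (fun y => g y + h y).
Proof.
  induction n; simpl; intros p N M g h [[l1 [L1 C1]] T1] [[l2 [L2 C2]] T2].
  - split; auto. exists (l1 + l2); split. now apply R0lim_plus.
    intros Hc. rewrite (C1 Hc), (C2 Hc). ring.
  - split. exists (l1 + l2); split. now apply R0lim_plus.
    intros Hc. rewrite (C1 Hc), (C2 Hc). ring.
    destruct T1 as [g' [Dg T1]], T2 as [h' [Dh T2]].
    exists (fun y => g' y + h' y). split. now apply derivs_plus. auto.
Qed.

Lemma PT_scal n : forall p N M k g, PT n p N M g -> PT n p N M (fun y => k * g y).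
Proof.
  induction n; simpl; intros p N M k g [[l [L C]] T].
  - split; auto. exists (k * l); split. now apply R0lim_scal. intros Hc; rewrite (C Hc); ring.
  - split. exists (k * l); split. now apply R0lim_scal. intros Hc; rewrite (C Hc); ring.
    destruct T as [g' [Dg T]]. exists (fun y => k * g' y). split. now apply derivs_scal. auto.
Qed.

Lemma cond_mult p1 N1 M1 p2 N2 M2 l1 l2 : cond p1 N1 M1 l1 -> cond p2 N2 M2 l2 ->
  cond (xorb p1 p2) (Nat.min (N1 + M2) (N2 + M1)) (M1 + M2) (l1 * l2).
Proof.
  unfold cond; intros C1 C2 Hc.
  destruct (Nat.eq_dec M1 0) as [E1|E1]; [|rewrite C1 by (right; lia); ring].
  destruct (Nat.eq_dec M2 0) as [E2|E2]; [|rewrite C2 by (right; lia); ring].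
  subst. destruct Hc as [[Hn Hp]|Hm]; [|lia].
  destruct p1, p2; simpl in Hp; try discriminate.
  - rewrite C1 by (left; split; auto; lia). ring.
  - rewrite C2 by (left; split; auto; lia). ring.
Qed.

Lemma PT_mult n : forall p1 N1 M1 p2 N2 M2 g h, PT n p1 N1 M1 g -> PT n p2 N2 M2 h ->
  PT n (xorb p1 p2) (Nat.min (N1 + M2) (N2 + M1)) (M1 + M2) (fun y => g y * h y).
Proof.
  induction n; intros p1 N1 M1 p2 N2 M2 g h T1 T2.
  - destruct T1 as [[l1 [L1 C1]] _], T2 as [[l2 [L2 C2]] _]. simpl. split; auto.
    exists (l1 * l2). split. now apply R0lim_mult. now apply cond_mult.
  - pose proof (PT_S _ _ _ _ _ T1) as T1'. pose proof (PT_S _ _ _ _ _ T2) as T2'.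
    destruct T1 as [[l1 [L1 C1]] [g' [Dg T1]]], T2 as [[l2 [L2 C2]] [h' [Dh T2]]]. simpl. split.
    exists (l1 * l2). split. now apply R0lim_mult. now apply cond_mult.
    exists (fun y => g' y * h y + g y * h' y). split. now apply derivs_mult.
    apply PT_plus.
    + assert (X := IHn _ _ _ _ _ _ _ _ T1 T2'). replace (negb (xorb p1 p2)) with (xorb (negb p1) p2) by (destruct p1, p2; auto).
      eapply PT_mono; [| |exact X]; lia.
    + assert (X := IHn _ _ _ _ _ _ _ _ T1' T2). replace (negb (xorb p1 p2)) with (xorb p1 (negb p2)) by (destruct p1, p2; auto).
      eapply PT_mono; [| |exact X]; lia.
Qed.

Definition parity_at (p : bool) (k : nat) := if Nat.even k then p else negb p.

Lemma parity_S p k : parity_at p (S k) = parity_at (negb p) k.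
Proof. unfold parity_at. rewrite Nat.even_succ, <- Nat.negb_even. destruct (Nat.even k), p; auto. Qed.

Lemma PT_family n : forall p N M (F : nat -> R -> R) (Lm : nat -> R),
  (forall k, derivs_on (F k) (F (S k))) -> (forall k, R0lim (F k) (Lm k)) ->
  (forall k, (k <= n)%nat -> cond (parity_at p k) (N - k) (M - k) (Lm k)) -> PT n p N M (F O).
Proof.
  induction n; simpl; intros p N M F Lm DF LF C.
  - split; auto. exists (Lm O). split; auto. specialize (C O (le_n _)). rewrite !Nat.sub_0_r in C. exact C.
  - split. exists (Lm O). split; auto. specialize (C O ltac:(lia)). rewrite !Nat.sub_0_r in C. exact C.
    exists (F 1%nat). split; auto. apply (IHn _ _ _ (fun k => F (S k)) (fun k => Lm (S k))); auto.
    intros k Hk. specialize (C (S k) ltac:(lia)). rewrite parity_S in C.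
    replace (pred N - k)%nat with (N - S k)%nat by lia. replace (pred M - k)%nat with (M - S k)%nat by lia.
    exact C.
Qed.

Lemma PT_get n : forall p N M g (F : nat -> R -> R) (Lm : nat -> R), PT n p N M g ->
  (forall y, 0 < y -> F O y = g y) ->
  (forall k, derivs_on (F k) (F (S k))) -> (forall k, R0lim (F k) (Lm k)) ->
  forall k, (k <= n)%nat -> cond (parity_at p k) (N - k) (M - k) (Lm k).
Proof.
  induction n; simpl; intros p N M g F Lm [[l [L C]] T] E DF LF k Hk.
  - replace k with O by lia. rewrite !Nat.sub_0_r. replace (Lm O) with l. exact C.
    apply (R0lim_uniq g); auto. apply (R0lim_ext (F O)); auto.
  - destruct k. rewrite !Nat.sub_0_r. replace (Lm O) with l. exact C.
    apply (R0lim_uniq g); auto. apply (R0lim_ext (F O)); auto.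
    destruct T as [g' [Dg T]]. rewrite parity_S.
    replace (N - S k)%nat with (pred N - k)%nat by lia. replace (M - S k)%nat with (pred M - k)%nat by lia.
    apply (IHn _ _ _ g' (fun k => F (S k)) (fun k => Lm (S k))); auto; try lia.
    intros y Hy. apply (derivs_uniq g); auto. apply (derivs_ext (F O)); auto.
Qed.

Lemma PT_const0 n : forall p N M, PT n p N M (fun _ => 0).
Proof.
  induction n; simpl; intros; split; try (exists 0; split; [apply R0lim_const| intros _; auto]); auto.
  exists (fun _ => 0). split; auto. intros y Hy. auto_derive; auto.
Qed.

Lemma PT_const n : forall N k, PT n false N 0 (fun _ => k).
Proof.
  destruct n; simpl; intros; split; try (exists k; split; [apply R0lim_const| intros [[_ H]|H]; [discriminate|lia]]); auto.
  exists (fun _ => 0). split. intros y Hy. auto_derive; auto. apply PT_const0.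
Qed.

Lemma PT_id n : forall N, PT n true N 1 (fun y => y).
Proof.
  destruct n; simpl; intros; split; try (exists 0; split; [apply R0lim_id| auto]); auto.
  1,2: intros _; auto.
  exists (fun _ => 1). split. intros y Hy. auto_derive; auto. apply PT_const.
Qed.


Lemma derivs_val' g a b : derivs_on g a -> (forall y, 0 < y -> a y = b y) -> derivs_on g b.
Proof. intros H E y Hy. rewrite <- E by auto. auto. Qed.

Lemma derivs_id : derivs_on (fun y => y) (fun _ => 1).
Proof. intros y Hy. auto_derive; auto. Qed.

Lemma derivs_const k : derivs_on (fun _ => k) (fun _ => 0).
Proof. intros y Hy. auto_derive; auto. Qed.

Section P1.
Context (f : R -> R) (D : nat -> R -> R)
  (HD : forall k, derivs_on (D k) (D (S k)))
  (Hf : forall y, 0 <= y -> D O y = f y)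
  (ODE : forall y, 0 < y ->
     D 2%nat y + (2 / y - y / 2) * D 1%nat y - / (y ^ 2) * sin (2 * f y) = 0)
  (f0 : f 0 = 0)
  (LD : forall k, R0lim (D k) (D k 0)).

Let s := fun y => sin (2 * f y).
Let c := fun y => cos (2 * f y).

Lemma Df1 : derivs_on f (D 1%nat).
Proof. apply (derivs_ext (D O)). intros; apply Hf; lra. apply HD. Qed.

Lemma Ds1 : derivs_on s (fun y => 2 * (c y * D 1%nat y)).
Proof.
  intros y Hy. unfold s, c.
  assert (Hg : is_derive (fun y => 2 * f y) y (2 * D 1%nat y)) by (apply is_derive_scal, Df1; auto).
  assert (H := is_derive_comp sin (fun y => 2 * f y) y _ _ (is_derive_sin _) Hg).
  replace (2 * (cos (2 * f y) * D 1%nat y)) with (scal (2 * D 1%nat y) (cos (2 * f y))). exact H.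
  unfold scal; simpl; unfold mult; simpl. ring.
Qed.

Lemma Dc1 : derivs_on c (fun y => -2 * (s y * D 1%nat y)).
Proof.
  intros y Hy. unfold s, c.
  assert (Hg : is_derive (fun y => 2 * f y) y (2 * D 1%nat y)) by (apply is_derive_scal, Df1; auto).
  assert (H := is_derive_comp cos (fun y => 2 * f y) y _ _ (is_derive_cos _) Hg).
  replace (-2 * (sin (2 * f y) * D 1%nat y)) with (scal (2 * D 1%nat y) (- sin (2 * f y))). exact H.
  unfold scal; simpl; unfold mult; simpl. ring.
Qed.

Lemma f_lim : R0lim f 0.
Proof.
  apply (R0lim_ext (D O)). intros; apply Hf; lra. rewrite <- f0, <- Hf by lra. apply LD.
Qed.

Lemma s_lim : R0lim s 0.
Proof.
  assert (H := R0lim_cont sin (fun y => 2 * f y) (2 * 0) (continuous_sin _) (R0lim_scal 2 f 0 f_lim)).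
  rewrite Rmult_0_r, sin_0 in H. exact H.
Qed.

Lemma c_lim : R0lim c 1.
Proof.
  assert (H := R0lim_cont cos (fun y => 2 * f y) (2 * 0) (continuous_cos _) (R0lim_scal 2 f 0 f_lim)).
  rewrite Rmult_0_r, cos_0 in H. exact H.
Qed.

Section Key.
Context (N : nat) (N1 : (1 <= N)%nat)
  (HN : forall j, (j < N)%nat -> Nat.even j = true -> D j 0 = 0).

Lemma fT n : PT n true N 1 f.
Proof.
  apply (PT_ext n _ _ _ (D O)). intros; apply Hf; lra.
  apply (PT_family n true N 1 D (fun k => D k 0)); auto.
  intros k Hk. unfold cond, parity_at. intros [[H1 H2]|H3].
  - apply HN. lia. destruct (Nat.even k); auto.
  - replace k with O by lia. apply HN; auto.
Qed.

Lemma d1T n : PT n false (N - 1) 0 (D 1%nat).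
Proof.
  apply (PT_family n false (N - 1) 0 (fun k => D (S k)) (fun k => D (S k) 0)); auto.
  intros k Hk. unfold cond, parity_at. intros [[H1 H2]|H3]; [|lia].
  apply HN. lia. rewrite Nat.even_succ, <- Nat.negb_even. destruct (Nat.even k); auto.
Qed.

Lemma sc_step1 m : PT m true N 1 s -> PT m false N 0 c -> PT (S m) true N 1 s /\ PT (S m) false N 0 c.
Proof.
  intros Ts Tc. pose proof (d1T m) as T1. split; simpl; split.
  - exists 0. split. apply s_lim. intros _; auto.
  - exists (fun y => 2 * (c y * D 1%nat y)). split. apply Ds1.
    apply PT_scal. eapply PT_mono; [| |apply (PT_mult _ _ _ _ _ _ _ _ _ Tc T1)]; lia.
  - exists 1. split. apply c_lim. unfold cond. intros [[_ H]|H]; [discriminate|lia].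
  - exists (fun y => -2 * (s y * D 1%nat y)). split. apply Dc1.
    apply PT_scal. eapply PT_mono; [| |apply (PT_mult _ _ _ _ _ _ _ _ _ Ts T1)]; lia.
Qed.

Lemma scT n : PT n true N 1 s /\ PT n false N 0 c.
Proof.
  induction n.
  - simpl. split; split; auto.
    exists 0. split. apply s_lim. intros _; auto.
    exists 1. split. apply c_lim. unfold cond. intros [[_ H]|H]; [discriminate|lia].
  - destruct IHn. apply sc_step1; auto.
Qed.

Lemma cm1T n : PT (S n) false N 2 (fun y => c y + -1).
Proof.
  simpl. split.
  - exists (1 + -1). split. apply R0lim_plus. apply c_lim. apply R0lim_const. intros _; ring.
  - exists (fun y => -2 * (s y * D 1%nat y)). split.
    + apply (derivs_val' _ (fun y => -2 * (s y * D 1%nat y) + 0)). apply derivs_plus. apply Dc1.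
      apply derivs_const. intros; ring.
    + apply PT_scal. eapply PT_mono; [| |apply (PT_mult _ _ _ _ _ _ _ _ _ (proj1 (scT n)) (d1T n))]; lia.
Qed.

Lemma uT n : PT (S n) true (S N) 3 (fun y => s y + -2 * f y).
Proof.
  simpl. split.
  - exists (0 + -2 * 0). split. apply R0lim_plus. apply s_lim. apply R0lim_scal, f_lim. intros _; ring.
  - exists (fun y => 2 * ((c y + -1) * D 1%nat y)). split.
    + apply (derivs_val' _ (fun y => 2 * (c y * D 1%nat y) + -2 * D 1%nat y)). apply derivs_plus. apply Ds1.
      apply derivs_scal, Df1. intros; ring.
    + apply PT_scal. eapply PT_mono; [| |apply (PT_mult _ _ _ _ _ _ _ _ _ (PT_S _ _ _ _ _ (cm1T n)) (d1T n))]; lia.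
Qed.

Let Rf := fun y => (s y + -2 * f y) + 1 / 2 * (y * (y * (y * D 1%nat y))).

Lemma RT n : PT n true (S N) 3 Rf.
Proof.
  assert (Y1 : PT n true N 1 (fun y => y * D 1%nat y)).
  { eapply PT_mono; [| |apply (PT_mult _ _ _ _ _ _ _ _ _ (PT_id n (N + 5)) (d1T n))]; lia. }
  assert (Y2 : PT n false (S N) 2 (fun y => y * (y * D 1%nat y))).
  { eapply PT_mono; [| |apply (PT_mult _ _ _ _ _ _ _ _ _ (PT_id n (N + 5)) Y1)]; lia. }
  assert (Y3 : PT n true (S N) 3 (fun y => y * (y * (y * D 1%nat y)))).
  { eapply PT_mono; [| |apply (PT_mult _ _ _ _ _ _ _ _ _ (PT_id n (N + 5)) Y2)]; lia. }
  unfold Rf. apply PT_plus. apply PT_S, uT. apply PT_scal; auto.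
Qed.

Let cA := fun k : nat => 2 * INR k + 2.
Let cB := fun k : nat => INR k * INR k + INR k - 2.
Let Lam := fun (k : nat) y => (y * y) * D (S (S k)) y + cA k * (y * D (S k) y) + cB k * D k y.

Lemma DLam k : derivs_on (Lam k) (Lam (S k)).
Proof.
  unfold Lam.
  eapply derivs_val'.
  - apply derivs_plus. apply derivs_plus.
    + apply derivs_mult. apply derivs_mult; apply derivs_id. apply HD.
    + apply derivs_scal. apply derivs_mult. apply derivs_id. apply HD.
    + apply derivs_scal. apply HD.
  - intros y Hy. unfold cA, cB. rewrite !S_INR. ring.
Qed.

Lemma Lam0 y : 0 < y -> Lam O y = Rf y.
Proof.
  intros Hy. unfold Lam, Rf, cA, cB, s. simpl INR. pose proof (ODE y Hy).
  assert (E2 : D 2%nat y = - ((2 / y - y / 2) * D 1%nat y) + / (y ^ 2) * sin (2 * f y)) by lra.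
  rewrite E2, Hf by lra. simpl. field. lra.
Qed.

Lemma LamLim k : R0lim (Lam k) (0 * 0 * D (S (S k)) 0 + cA k * (0 * D (S k) 0) + cB k * D k 0).
Proof.
  unfold Lam. apply R0lim_plus. apply R0lim_plus.
  - apply R0lim_mult; auto. apply R0lim_mult; apply R0lim_id.
  - apply R0lim_scal. apply R0lim_mult; auto. apply R0lim_id.
  - apply R0lim_scal; auto.
Qed.

Lemma key : Nat.even N = true -> D N 0 = 0.
Proof.
  intros Ev.
  assert (C := PT_get N true (S N) 3 Rf Lam _ (RT N) Lam0 DLam LamLim N (le_n _)).
  unfold cond, parity_at in C. rewrite Ev in C.
  assert (Z : 0 * 0 * D (S (S N)) 0 + cA N * (0 * D (S N) 0) + cB N * D N 0 = 0) by (apply C; left; split; auto; lia).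
  assert (N2 : (2 <= N)%nat).
  { destruct N as [|[|n']]; try lia. simpl in Ev. discriminate. }
  apply le_INR in N2. simpl in N2.
  unfold cA, cB in Z.
  assert (0 < INR N * INR N + INR N - 2) by nra.
  apply (Rmult_eq_reg_l (INR N * INR N + INR N - 2)). lra. lra.
Qed.
End Key.

Lemma even_all N : forall j, (j < N)%nat -> Nat.even j = true -> D j 0 = 0.
Proof.
  induction N; intros j Hj Ev. lia.
  destruct (Nat.eq_dec j N). 2: apply IHN; auto; lia.
  subst j. destruct N. rewrite Hf by lra. auto.
  apply key; auto. lia.
Qed.
End P1.


Theorem proposition1 (f : R -> R) (D : nat -> R -> R) :
  smooth_derivs f D ->
  (forall y, 0 < y ->
     D 2%nat y + (2 / y - y / 2) * D 1%nat y - / (y ^ 2) * sin (2 * f y) = 0) ->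
  f 0 = 0 ->
  (exists L : R, is_lim f p_infty (Finite L)) ->
  (forall k : nat, D (2 * k)%nat 0 = 0) /\
  (forall k : nat, (1 <= k)%nat ->
     exists C : R, 0 < C /\
       forall y, 1 <= y -> Rabs (D k y) <= C * / (y ^ (2 + k))).
Proof.
  intros [H0 [H1 H2]] ODE f0 Hlim.
  assert (HD : forall k, derivs_on (D k) (D (S k))) by (intros k y Hy; apply H1; auto).
  assert (LD : forall k, R0lim (D k) (D k 0)).
  { intros k.
    assert (L := R0lim_plus _ _ _ _ (R0lim_const (D k 0)) (R0lim_mult _ _ _ _ R0lim_id (H2 k))).
    rewrite Rmult_0_l, Rplus_0_r in L. revert L. apply R0lim_ext.
    intros y Hy. field. lra. }
  split.
  - intros k. apply (even_all f D HD H0 ODE f0 LD (S (2 * k))). lia.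
    rewrite Nat.even_mul. auto.
  - intros k Hk. destruct k. lia.
    destruct (strong_all f D HD H0 ODE Hlim k k (le_n _)) as [C HC].
    exists (Rabs C + 1). split. pose proof (Rabs_pos C); lra.
    intros y Hy. eapply Rle_trans. apply HC; auto. unfold Rdiv.
    apply Rmult_le_compat_r. apply Rlt_le, Rinv_0_lt_compat, pow_lt; lra.
    pose proof (Rle_abs C); lra.
Qed.
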